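(* Let $\psi:\mathbb{R}\to\mathbb{C}$ be a unit-energy continuous wavelet that is an eigenfunction of the Fourier transform (an ''isoresolution wavelet''), i.e. there is $\lambda\in\mathbb{C}$ with $|\lambda|=\sqrt{2\pi}$ such that $\Psi(\omega)=\lambda\,\psi(\omega)$ for all $\omega\in\mathbb{R}$, and suppose $H_t(\psi)$ is finite. Then $H_t(\psi)=H_f(\psi)$.
   Context: The Fourier transform is $\Psi(\omega)=\int_{-\infty}^{+\infty}\psi(t)e^{-j\omega t}\,dt$. For a unit-energy wavelet, the time entropy is $H_t(\psi):=-\int_{-\infty}^{+\infty}|\psi(t)|^2\log_2|\psi(t)|^2\,dt$ and the frequency entropy is $H_f(\psi):=-\int_{-\infty}^{+\infty}\frac{1}{2\pi}|\Psi(\omega)|^2\log_2\!\left(\frac{1}{2\pi}|\Psi(\omega)|^2\right)d\omega$. *)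

(* Defs.v *)
From HB Require Import structures.
From mathcomp Require Import all_boot all_order all_algebra.
From mathcomp Require Import all_classical all_reals all_analysis.
From mathcomp Require Import complex.
Set Implicit Arguments. Unset Strict Implicit. Unset Printing Implicit Defensive.
Import Order.TTheory GRing.Theory Num.Theory numFieldNormedType.Exports.
Local Open Scope ring_scope.

Section Defs.
Variable R : realType.
Local Notation mu := (@lebesgue_measure R).

Definition cmod (z : R[i]) : R := Num.sqrt (complex.Re z ^+ 2 + complex.Im z ^+ 2).

(* base-2 logarithm; note ln 0 = 0 in MathComp-Analysis, so the usual
   convention 0 * log2 0 = 0 holds automatically *)
Definition log2 (x : R) : R := ln x / ln 2.

Definition expmi (x : R) : R[i] := Complex (cos x) (- sin x).

Definition cintegral (f : R -> R[i]) : R[i] :=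
  Complex (\int[mu]_(t in [set: R]) complex.Re (f t))%R
          (\int[mu]_(t in [set: R]) complex.Im (f t))%R.

Definition fourier (psi : R -> R[i]) (w : R) : R[i] :=
  cintegral (fun t => psi t * expmi (w * t)).

Definition energy (psi : R -> R[i]) : \bar R :=
  (\int[mu]_(t in [set: R]) ((cmod (psi t)) ^+ 2)%:E)%E.

Definition Ht_integrand (psi : R -> R[i]) (t : R) : R :=
  (cmod (psi t)) ^+ 2 * log2 ((cmod (psi t)) ^+ 2).

Definition time_entropy (psi : R -> R[i]) : \bar R :=
  (- \int[mu]_(t in [set: R]) (Ht_integrand psi t)%:E)%E.

Definition Hf_integrand (psi : R -> R[i]) (w : R) : R :=
  (cmod (fourier psi w)) ^+ 2 / (2 * pi) *
    log2 ((cmod (fourier psi w)) ^+ 2 / (2 * pi)).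

Definition freq_entropy (psi : R -> R[i]) : \bar R :=
  (- \int[mu]_(w in [set: R]) (Hf_integrand psi w)%:E)%E.
End Defs.

(* Main.v *)
Require Import Defs.
From HB Require Import structures.
From mathcomp Require Import all_boot all_order all_algebra.
From mathcomp Require Import all_classical all_reals all_analysis.
From mathcomp Require Import complex.
From mathcomp Require Import ring lra.
Import Order.TTheory GRing.Theory Num.Theory numFieldNormedType.Exports.
Local Open Scope ring_scope.

Lemma cmod_sqr (R : realType) (z : R[i]) :
  cmod z ^+ 2 = complex.Re z ^+ 2 + complex.Im z ^+ 2.
Proof. by rewrite /cmod sqr_sqrtr // addr_ge0 // sqr_ge0. Qed.

Lemma cmodM_sqr (R : realType) (a b : R[i]) :
  cmod (a * b) ^+ 2 = cmod a ^+ 2 * cmod b ^+ 2.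
Proof.
rewrite !cmod_sqr; case: a => a1 a2; case: b => b1 b2 /=; ring.
Qed.

Theorem proposition4 (R : realType) (psi : R -> R[i]) (lambda : R[i]) :
  continuous (fun t : R => complex.Re (psi t)) ->
  continuous (fun t : R => complex.Im (psi t)) ->
  (@lebesgue_measure R).-integrable [set: R] (fun t => (cmod (psi t))%:E) ->
  energy psi = 1%E ->
  cmod lambda = Num.sqrt (2 * pi) ->
  (forall w : R, fourier psi w = lambda * psi w) ->
  (@lebesgue_measure R).-integrable [set: R] (fun t => (Ht_integrand psi t)%:E) ->
  time_entropy psi = freq_entropy psi.
Proof.
move=> _ _ _ _ hl hf _.
have E : forall w, Hf_integrand psi w = Ht_integrand psi w.
  move=> w; rewrite /Hf_integrand /Ht_integrand hf cmodM_sqr hl.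
  have hp : (0 : R) < 2 * pi by rewrite mulr_gt0 // pi_gt0.
  rewrite sqr_sqrtr ?ltW //.
  have -> : 2 * pi * cmod (psi w) ^+ 2 / (2 * pi) = cmod (psi w) ^+ 2.
    by rewrite mulrC mulrA mulVf ?mul1r // gt_eqF.
  by [].
rewrite /time_entropy /freq_entropy.
by under [in RHS]eq_integral => x _ do rewrite E.
Qed.
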